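(* Let $\gamma,\sigma:[a,b]\to V$ be continuous paths of bounded variation in a finite-dimensional real inner product space $V$, fix $(s,t)\in[a,b]^2$, and define $f(x):=K^{x\gamma,\sigma}(s,t)=\sum_{k\ge0}x^k\langle S(\gamma)^k_{a,s},S(\sigma)^k_{a,t}\rangle_k$ for $x\in\mathbb{R}$, where $S(\gamma)^k_{a,s}=\int_{a<u_1<\cdots<u_k<s}d\gamma_{u_1}\cdots d\gamma_{u_k}$ and $\langle\cdot,\cdot\rangle_k$ is the Hilbert–Schmidt inner product on $V^{\otimes k}$. Then $f$ is infinitely differentiable and, for every $k\in\mathbb{N}$, \[ f^{(k)}(x)=\sum_{l=0}^{\infty}x^{l}\frac{(l+k)!}{l!}\left\langle S(\gamma)_{a,s}^{l+k},S(\sigma)_{a,t}^{l+k}\right\rangle_{l+k}. \] In particular, \[ \left|f^{(k)}(x)\right|\leq\frac{L_{s}(\gamma)^{k/2}L_{t}(\sigma)^{k/2}}{|x|^{k/2}}I_{k}\left(2\sqrt{|x|L_{s}(\gamma)L_{t}(\sigma)}\right), \] where $L_s(\gamma)$ is the length of the path segment $\gamma|_{[a,s]}$, $L_t(\sigma)$ that of $\sigma|_{[a,t]}$, and $I_k$ is the modified Bessel function of the first kind of order $k$.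
   Context: $K^{\gamma,\sigma}(s,t)=\sum_{k\ge0}\langle S(\gamma)^k_{a,s},S(\sigma)^k_{a,t}\rangle_k$ is the original signature kernel, and $x\gamma$ denotes the path $u\mapsto x\gamma_u$. *)

(* Defs.v *)
(* V = R^d realised as row vectors 'rV[R]_d with the
   standard (Euclidean) inner product. *)
From HB Require Import structures.
From mathcomp Require Import all_boot all_order all_algebra.
From mathcomp Require Import all_classical all_reals all_analysis.
Set Implicit Arguments. Unset Strict Implicit. Unset Printing Implicit Defensive.
Import Order.TTheory GRing.Theory Num.Theory.
Import numFieldNormedType.Exports.
Local Open Scope classical_set_scope.
Local Open Scope ring_scope.

Section SigDefs.
Variable R : realType.

Definition tagged_partition (a b : R) (n : nat) (t xi : nat -> R) : Prop :=
  t 0%N = a /\ t n = b /\ (forall i, (i < n)%N -> t i <= xi i <= t i.+1).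

Definition mesh_lt (n : nat) (t : nat -> R) (delta : R) : Prop :=
  forall i, (i < n)%N -> t i.+1 - t i < delta.

Definition RS_sum (f g : R -> R) (n : nat) (t xi : nat -> R) : R :=
  \sum_(i < n) f (xi i) * (g (t i.+1) - g (t i)).

Definition is_RS_integral (f g : R -> R) (a b I : R) : Prop :=
  forall e : R, 0 < e -> exists2 delta : R, 0 < delta &
    forall n t xi, tagged_partition a b n t xi -> mesh_lt n t delta ->
      `|RS_sum f g n t xi - I| < e.

Definition RS_integral (f g : R -> R) (a b : R) : R :=
  xget 0 [set I | is_RS_integral f g a b I].

Variable d : nat.
Definition vec := 'rV[R]_d.

Definition coord (g : R -> vec) (i : 'I_d) : R -> R := fun u => g u 0 i.

Definition enorm (v : vec) : R := Num.sqrt (\sum_i v 0 i ^+ 2).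

Definition partition (a b : R) (n : nat) (t : nat -> R) : Prop :=
  t 0%N = a /\ t n = b /\ (forall i, (i < n)%N -> t i <= t i.+1).

Definition variation_sums (g : R -> vec) (a b : R) : set R :=
  [set y | exists n t, partition a b n t /\
     y = \sum_(i < n) enorm (g (t i.+1) - g (t i))].

Definition bounded_variation_path (g : R -> vec) (a b : R) : Prop :=
  has_ubound (variation_sums g a b).

Definition path_length (g : R -> vec) (a b : R) : R := sup (variation_sums g a b).

(* sig_rev g a [:: i_k; ...; i_1] s
     = int_{a<u_1<...<u_k<s} d g^{i_1}_{u_1} ... d g^{i_k}_{u_k}
   (the word is stored reversed so that the last letter is integrated last) *)
Fixpoint sig_rev (g : R -> vec) (a : R) (w : seq 'I_d) : R -> R :=
  match w with
  | [::] => fun _ => 1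
  | i :: w' => fun s => RS_integral (sig_rev g a w') (coord g i) a s
  end.

(* coefficient of e_{i_1} (x) ... (x) e_{i_k} in S(g)^k_{a,s}, w = (i_1,...,i_k) *)
Definition sig_coef (g : R -> vec) (a s : R) (k : nat) (w : k.-tuple 'I_d) : R :=
  sig_rev g a (rev w) s.

(* Hilbert--Schmidt inner product < S(g)^k_{a,s}, S(h)^k_{a,t} >_k
   (the e_w, w words of length k, form an orthonormal basis of V^{(x)k}) *)
Definition sig_inner (g h : R -> vec) (a s t : R) (k : nat) : R :=
  \sum_(w : k.-tuple 'I_d) sig_coef g a s w * sig_coef h a t w.

Definition sig_kernel (g h : R -> vec) (a s t : R) : R :=
  limn (series (sig_inner g h a s t)).

End SigDefs.

Definition besselI {R : realType} (k : nat) (z : R) : R :=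
  limn (series (fun m : nat => (z / 2) ^+ (2 * m + k) / ((m`!)%:R * ((m + k)`!)%:R))).

(* Main.v *)
Require Import Defs.
From HB Require Import structures.
From mathcomp Require Import all_boot all_order all_algebra.
From mathcomp Require Import all_classical all_reals all_analysis.
From mathcomp Require Import ring lra.
Import Order.TTheory GRing.Theory Num.Theory.
Import numFieldNormedType.Exports.
Local Open Scope classical_set_scope.
Local Open Scope ring_scope.
Definition En {R : realType} {T : finType} (f : T -> R) : R :=
  Num.sqrt (\sum_x f x ^+ 2).

Lemma En_ge0 {R : realType} {T : finType} (f : T -> R) : 0 <= En f.
Proof. exact: sqrtr_ge0. Qed.

Lemma sumsq_ge0 {R : realType} {T : finType} (f : T -> R) : 0 <= \sum_x f x ^+ 2.
Proof. by apply: sumr_ge0 => x _; exact: sqr_ge0. Qed.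

Lemma En_sq {R : realType} {T : finType} (f : T -> R) : En f ^+ 2 = \sum_x f x ^+ 2.
Proof. by rewrite /En sqr_sqrtr // sumsq_ge0. Qed.

Lemma sumsq_eq0 {R : realType} {T : finType} (f : T -> R) :
  \sum_x f x ^+ 2 = 0 -> forall x, f x = 0.
Proof.
move=> h x; apply/eqP; rewrite -sqrf_eq0; apply/eqP.
have : f x ^+ 2 <= \sum_x f x ^+ 2.
  by rewrite (bigD1 x) //= lerDl; apply: sumr_ge0 => y _; exact: sqr_ge0.
by rewrite h => hx; apply/eqP; rewrite eq_le hx sqr_ge0.
Qed.

Lemma CS {R : realType} {T : finType} (f h : T -> R) :
  \sum_x f x * h x <= En f * En h.
Proof.
set A := En f; set B := En h.
have A0 : 0 <= A by exact: En_ge0.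
have B0 : 0 <= B by exact: En_ge0.
have key : 0 <= \sum_x (B * f x - A * h x) ^+ 2 by exact: sumsq_ge0.
have E : \sum_x (B * f x - A * h x) ^+ 2 =
   B ^+ 2 * \sum_x f x ^+ 2 + A ^+ 2 * \sum_x h x ^+ 2 - 2 * (A * B) * \sum_x f x * h x.
  rewrite !mulr_sumr -big_split /= -sumrB.
  by apply: eq_bigr => x _; ring.
rewrite -[\sum_x f x ^+ 2]En_sq -[\sum_x h x ^+ 2]En_sq -/A -/B in E.
rewrite E in key.
have [AB0|ABpos] := eqVneq (A * B) 0.
  move: AB0 => /eqP; rewrite mulf_eq0 => /orP[] /eqP H0.
  - have : \sum_x f x ^+ 2 = 0 by rewrite -En_sq -/A H0 expr2 mulr0.
    move/sumsq_eq0 => hf; rewrite big1 ?H0 ?mul0r // => x _; by rewrite hf mul0r.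
  - have : \sum_x h x ^+ 2 = 0 by rewrite -En_sq -/B H0 expr2 mulr0.
    move/sumsq_eq0 => hf; rewrite big1 ?H0 ?mulr0 // => x _; by rewrite hf mulr0.
have ABp : 0 < A * B by rewrite lt_def ABpos mulr_ge0.
rewrite -subr_ge0; rewrite -(pmulr_rge0 _ (_ : 0 < 2 * (A * B))); last by rewrite mulr_gt0.
by move: key; rewrite (_ : _ - _ = 2 * (A * B) * (A * B - \sum_x f x * h x)) //; ring.
Qed.

Lemma En_triangle {R : realType} {T : finType} (f h : T -> R) :
  En (fun x => f x + h x) <= En f + En h.
Proof.
rewrite /En -[X in _ <= X]ger0_norm ?addr_ge0 ?sqrtr_ge0 // -sqrtr_sqr.
rewrite ler_sqrt ?sqr_ge0 //.
have := CS f h; rewrite /En => H.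
rewrite sqrrD !sqr_sqrtr ?sumsq_ge0 //.
rewrite (_ : \sum_x (f x + h x) ^+ 2 =
   \sum_x f x ^+ 2 + 2 * \sum_x f x * h x + \sum_x h x ^+ 2); last first.
  rewrite mulr_sumr -!big_split /=; apply: eq_bigr => x _; ring.
rewrite -addrA -[X in _ <= X]addrA lerD2l lerD2r.
rewrite (_ : Num.sqrt (\sum_x f x ^+ 2) * Num.sqrt (\sum_x h x ^+ 2) *+ 2 =
   2 * (Num.sqrt (\sum_x f x ^+ 2) * Num.sqrt (\sum_x h x ^+ 2))); last by rewrite mulr_natl.
by rewrite ler_pM2l.
Qed.
Lemma En_sum {R : realType} {T : finType} (n : nat) (F : nat -> T -> R) :
  En (fun x => \sum_(j < n) F j x) <= \sum_(j < n) En (F j).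
Proof.
elim: n => [|n IH].
  rewrite big_ord0 /En (eq_bigr (fun _ => 0)) ?big1 ?sqrtr0 // => x _.
  by rewrite big_ord0 expr2 mulr0.
rewrite big_ord_recr /=.
apply: le_trans (_ : En (fun x => \sum_(j < n) F j x) + En (F n) <= _); last by rewrite lerD2r.
rewrite (_ : (fun x => \sum_(j < n.+1) F j x) = (fun x => \sum_(j < n) F j x + F n x)).
  exact: En_triangle.
by apply/funext => x; rewrite big_ord_recr.
Qed.

Lemma En_le {R : realType} {T : finType} (f h : T -> R) :
  (forall x, `|f x| <= h x) -> En f <= En h.
Proof.
move=> H; rewrite /En ler_sqrt ?sumsq_ge0 //; apply: ler_sum => x _.
rewrite -real_normK ?num_real // !expr2.
by apply: ler_pM => //; exact: H.
Qed.

Lemma En_const {R : realType} {T : finType} (e : R) : 0 <= e ->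
  En (fun _ : T => e) = e * Num.sqrt (#|T|%:R).
Proof.
move=> e0; rewrite /En sumr_const -[e ^+ 2 *+ _]mulr_natl sqrtrM ?ler0n //.
by rewrite sqrtr_sqr ger0_norm // mulrC.
Qed.

Lemma sum_tupleS {R : realType} {T : finType} (k : nat) (F : (k.+1).-tuple T -> R) :
  \sum_(w : k.+1.-tuple T) F w =
  \sum_(i : T) \sum_(w : k.-tuple T) F [tuple of i :: w].
Proof.
rewrite pair_big /=.
rewrite (reindex (fun p : T * k.-tuple T => [tuple of p.1 :: p.2])) /=.
  by apply: eq_bigr.
exists (fun w : k.+1.-tuple T => (thead w, [tuple of behead w])).
  move=> [i w] _ /=; rewrite theadE; congr pair; exact: val_inj.
by move=> w _ /=; rewrite -tuple_eta.
Qed.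

Lemma En_tensor {R : realType} {d : nat} (k : nat) (A : seq 'I_d -> R) (v : 'I_d -> R) :
  En (fun w : k.+1.-tuple 'I_d => A (behead w) * v (thead w)) =
  En (fun w : k.-tuple 'I_d => A w) * En v.
Proof.
rewrite /En -sqrtrM ?sumsq_ge0 //; congr Num.sqrt.
rewrite sum_tupleS mulrC mulr_suml. apply: eq_bigr => i _.
rewrite mulr_sumr; apply: eq_bigr => w _ /=.
by rewrite theadE exprMn mulrC.
Qed.

Lemma En_abs {R : realType} {T : finType} (f : T -> R) : En (fun x => `|f x|) = En f.
Proof. by rewrite /En; congr Num.sqrt; apply: eq_bigr => x _; rewrite real_normK // num_real. Qed.
Lemma enorm_ge0 {R : realType} {d : nat} (v : 'rV[R]_d) : 0 <= enorm v.
Proof. exact: sqrtr_ge0. Qed.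

Lemma var_ext {R : realType} {d : nat} (g : R -> 'rV[R]_d) a u v n t :
  Defs.partition a u n t -> u <= v ->
  variation_sums g a v (\sum_(i < n) enorm (g (t i.+1) - g (t i)) + enorm (g v - g u)).
Proof.
move=> [t0 [tn tm]] uv.
exists n.+1, (fun i => if (i <= n)%N then t i else v); split.
  split => //; split; first by rewrite ltnn.
  move=> i; rewrite ltnS leq_eqVlt => /orP[/eqP ->|lin].
    by rewrite eqxx ltnn /= tn.
  by rewrite lin orbT; exact: tm.
rewrite big_ord_recr /= leqnn ltnn tn; congr (_ + _).
by apply: eq_bigr => i _ /=; rewrite ltn_ord ltnW.
Qed.

Lemma var_bound {R : realType} {d : nat} {g : R -> 'rV[R]_d} {a b v : R} :
  bounded_variation_path g a b -> v <= b -> has_ubound (variation_sums g a v).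
Proof.
move=> [M HM] vb; exists M => y [n [t [Pt ->]]].
apply: (le_trans _ (HM _ (var_ext g _ _ _ _ _ Pt vb))).
by rewrite lerDl enorm_ge0.
Qed.

Lemma var_nonempty {R : realType} {d : nat} (g : R -> 'rV[R]_d) {a u : R} :
  a <= u -> variation_sums g a u (enorm (g u - g a)).
Proof.
move=> au; exists 1%N, (fun i => if i == 0%N then a else u); split.
  by split => //; split => // i; rewrite ltnS leqn0 => /eqP -> /=.
by rewrite big_ord1.
Qed.

Lemma L_ge0 {R : realType} {d : nat} {g : R -> 'rV[R]_d} {a b u : R} :
  bounded_variation_path g a b -> a <= u -> u <= b -> 0 <= path_length g a u.
Proof.
move=> BV au ub.
have H1 := ub_le_sup (var_bound BV ub) (var_nonempty g au).
exact: le_trans (enorm_ge0 _) H1.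
Qed.

Lemma L_step {R : realType} {d : nat} {g : R -> 'rV[R]_d} {a b u v : R} :
  bounded_variation_path g a b -> a <= u -> u <= v -> v <= b ->
  path_length g a u + enorm (g v - g u) <= path_length g a v.
Proof.
move=> BV au uv vb.
rewrite -lerBrDr; apply: ge_sup.
  by exists (enorm (g u - g a)); exact: var_nonempty.
move=> y [n [t [Pt ->]]]; rewrite lerBrDr.
apply: ub_le_sup; first exact: var_bound BV vb.
exact: var_ext.
Qed.
Lemma pow_step {R : realType} (p q : R) (k : nat) : 0 <= p -> p <= q ->
  p ^+ k / (k`!)%:R * (q - p) <= (q ^+ k.+1 - p ^+ k.+1) / (k.+1`!)%:R.
Proof.
move=> p0 pq.
have S : k.+1%:R * p ^+ k <= \sum_(i < k.+1) q ^+ (k.+1.-1 - i) * p ^+ i.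
  rewrite -[X in X%:R]card_ord -sum1_card natr_sum mulr_suml.
  apply: ler_sum => i _; rewrite mul1r /=.
  have ik : (i <= k)%N by rewrite -ltnS ltn_ord.
  rewrite -{1}(subnK ik) exprD ler_wpM2r ?exprn_ge0 //.
  by rewrite lerXn2r ?nnegrE // (le_trans p0).
rewrite subrXX factS natrM.
have kf : 0 < (k`!)%:R :> R by rewrite ltr0n fact_gt0.
have k1 : 0 < k.+1%:R :> R by rewrite ltr0n.
rewrite [X in _ <= X](_ : _ = (q - p) * (\sum_(i < k.+1) q ^+ (k.+1.-1 - i) * p ^+ i)
   / k.+1%:R / (k`!)%:R); last by rewrite invfM mulrA.
rewrite mulrC mulrA ler_pM2r ?invr_gt0 // ler_pdivlMr // mulrC.
by rewrite mulrAC [X in X <= _]mulrC ler_wpM2l ?subr_ge0 // mulrC.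
Qed.
Definition upart {R : realType} (a u : R) (n : nat) (j : nat) : R :=
  a + j%:R * (u - a) / n.+1%:R.

Lemma upart_diff {R : realType} (a u : R) n j :
  upart a u n j.+1 - upart a u n j = (u - a) / n.+1%:R.
Proof. by rewrite /upart -nat1r; field. Qed.

Lemma upart_range {R : realType} (a u : R) n j : a <= u -> (j <= n.+1)%N ->
  a <= upart a u n j <= u.
Proof.
move=> au jn; rewrite /upart; apply/andP; split.
  by rewrite lerDl divr_ge0 // mulr_ge0 // subr_ge0.
rewrite -lerBrDl ler_pdivrMr ?ltr0n // mulrC ler_wpM2l ?subr_ge0 //.
by rewrite ler_nat.
Qed.

Lemma upart_tp {R : realType} (a u : R) n : a <= u ->
  tagged_partition a u n.+1 (upart a u n) (upart a u n).
Proof.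
move=> au; split; first by rewrite /upart mul0r mul0r addr0.
split; first by rewrite /upart mulrAC divff ?mul1r ?pnatr_eq0 // addrC subrK.
move=> i _; rewrite lexx /= -subr_ge0 upart_diff.
by rewrite divr_ge0 // subr_ge0.
Qed.

Lemma upart_mesh {R : realType} (a u delta : R) : 0 < delta ->
  \forall n \near \oo, mesh_lt n.+1 (upart a u n) delta.
Proof.
move=> d0; exists (Num.trunc ((u - a) / delta)) => // n /= Nn i _.
rewrite upart_diff ltr_pdivrMr ?ltr0n // mulrC -ltr_pdivrMr //.
apply: lt_le_trans (truncnS_gt _) _; by rewrite ler_nat ltnS.
Qed.

Lemma RS_unique {R : realType} (F G : R -> R) a u I J : a <= u ->
  is_RS_integral F G a u I -> is_RS_integral F G a u J -> I = J.
Proof.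
move=> au HI HJ; apply/eqP; rewrite -subr_eq0 -normr_le0.
apply/ler_addgt0Pr => e e0; rewrite add0r.
have e2 : 0 < e / 2 by rewrite divr_gt0.
have [d1 d10 H1] := HI _ e2; have [d2 d20 H2] := HJ _ e2.
have [n Hn] : exists n, mesh_lt n.+1 (upart a u n) (Num.min d1 d2).
  have dm : 0 < Num.min d1 d2 by rewrite lt_min d10 d20.
  have [N _ HN] := upart_mesh a u _ dm.
  by exists N; apply: HN => /=.
have T := upart_tp a u n au.
have m1 : mesh_lt n.+1 (upart a u n) d1.
  by move=> i Hi; apply: lt_le_trans (Hn i Hi) _; rewrite ge_min lexx.
have m2 : mesh_lt n.+1 (upart a u n) d2.
  by move=> i Hi; apply: lt_le_trans (Hn i Hi) _; rewrite ge_min lexx orbT.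
have A1 := H1 _ _ _ T m1; have A2 := H2 _ _ _ T m2.
rewrite (_ : I - J = - (RS_sum F G n.+1 (upart a u n) (upart a u n) - I) +
   (RS_sum F G n.+1 (upart a u n) (upart a u n) - J)); last by ring.
apply: le_trans (ler_normD _ _) _; rewrite normrN.
by rewrite [e]splitr; apply: lerD; apply: ltW.
Qed.

Lemma RS_approx {R : realType} (F G : R -> R) a u e : a <= u -> 0 < e ->
  \forall n \near \oo, `|RS_integral F G a u| <=
      `|RS_sum F G n.+1 (upart a u n) (upart a u n)| + e.
Proof.
move=> au e0.
have [[I HI]|NI] := pselect (exists I, is_RS_integral F G a u I).
  have H : is_RS_integral F G a u (RS_integral F G a u).
    by rewrite /RS_integral; apply: (xgetPex 0 (P := [set I | is_RS_integral F G a u I])); exists I.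
  have [dl dl0 Hd] := H _ e0.
  have [N _ HN] := upart_mesh a u _ dl0.
  exists N => // n /= Nn.
  have A := Hd _ _ _ (upart_tp a u n au) (HN _ Nn).
  set S := RS_sum _ _ _ _ _ in A *.
  rewrite (_ : RS_integral F G a u = S - (S - RS_integral F G a u)); last by ring.
  apply: le_trans (ler_normB _ _) _; rewrite lerD2l; exact: ltW.
have -> : RS_integral F G a u = 0.
  rewrite /RS_integral; apply: xgetPN => x Hx; apply: NI; by exists x.
apply: nearW => n; rewrite normr0; apply: addr_ge0 => //; exact: ltW.
Qed.
Lemma sig_rev_cons {R : realType} {d : nat} (g : R -> 'rV[R]_d) a k
  (w : k.+1.-tuple 'I_d) u :
  sig_rev g a w u = RS_integral (sig_rev g a (behead w)) (Defs.coord g (thead w)) a u.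
Proof. by case: w => [[|i w'] //= _]. Qed.

Lemma tele {R : realType} (f : nat -> R) (n : nat) :
  \sum_(j < n) (f j.+1 - f j) = f n - f 0%N.
Proof. by rewrite -(big_mkord xpredT (fun j => f j.+1 - f j)) telescope_sumr. Qed.

Lemma sig_bound {R : realType} {d : nat} (g : R -> 'rV[R]_d) a b :
  bounded_variation_path g a b -> forall k u, a <= u -> u <= b ->
  En (fun w : k.-tuple 'I_d => sig_rev g a w u) <= path_length g a u ^+ k / (k`!)%:R.
Proof.
move=> BV; elim => [|k IH] u au ub.
  rewrite (_ : (fun w : 0.-tuple 'I_d => sig_rev g a w u) = fun _ => 1); last first.
    by apply/funext => w; rewrite (tuple0 w).
  by rewrite En_const // card_tuple expn0 sqrtr1 mulr1 expr0 divr1.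
set L := path_length g a.
apply/ler_addgt0Pr => e e0.
set C := Num.sqrt (#|{: k.+1.-tuple 'I_d}|%:R : R).
have C0 : 0 <= C by exact: sqrtr_ge0.
set eps := e / (C + 1).
have eps0 : 0 < eps by rewrite divr_gt0 // ltr_wpDl.
have epsC : eps * C <= e.
  rewrite /eps mulrAC ler_pdivrMr ?ltr_wpDl // ler_wpM2l ?ltW //.
  by rewrite ltrDl.
pose t := upart a u.
pose RSw n (w : k.+1.-tuple 'I_d) :=
  RS_sum (sig_rev g a (behead w)) (Defs.coord g (thead w)) n.+1 (t n) (t n).
have Hall : \forall n \near \oo, forall w : k.+1.-tuple 'I_d,
    `|sig_rev g a w u| <= `|RSw n w| + eps.
  apply: filter_forall => w; rewrite sig_rev_cons.
  exact: RS_approx.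
have [n _ Hn] := Hall; have {Hall}Hn := Hn n (leqnn n).
apply: le_trans (_ : En (fun w => `|RSw n w| + eps) <= _).
  by apply: En_le => w; exact: Hn.
apply: le_trans (En_triangle _ _) _.
rewrite (En_const _ (ltW eps0)) -/C.
apply: le_trans (_ : _ <= L u ^+ k.+1 / (k.+1`!)%:R + eps * C) _; last by rewrite lerD2l.
rewrite lerD2r.
rewrite (En_abs (RSw n)).
pose X (j : nat) (w : k.+1.-tuple 'I_d) :=
  sig_rev g a (behead w) (t n j) * (fun i => (g (t n j.+1) - g (t n j)) 0 i) (thead w).
rewrite (_ : RSw n = fun w => \sum_(j < n.+1) X j w); last first.
  apply/funext => w; rewrite /RSw /RS_sum; apply: eq_bigr => j _.
  by rewrite /X /Defs.coord !mxE.
apply: le_trans (En_sum _ _) _.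
have tr j : (j <= n.+1)%N -> a <= t n j <= b.
  move=> jn; have /andP[h1 h2] := upart_range a u n j au jn.
  by rewrite h1 (le_trans h2 ub).
apply: le_trans (_ : \sum_(j < n.+1) (L (t n j.+1) ^+ k.+1 - L (t n j) ^+ k.+1) / (k.+1`!)%:R <= _).
  apply: ler_sum => j _.
  have /andP[aj jb] := tr j (ltnW (ltn_ord j)).
  have /andP[aj1 j1b] := tr j.+1 (ltn_ord j).
  have tjj : t n j <= t n j.+1.
    by rewrite -subr_ge0 /t upart_diff divr_ge0 // subr_ge0.
  have Lst := L_step BV aj tjj j1b.
  have Lj0 : 0 <= L (t n j) := L_ge0 BV aj jb.
  rewrite /X (En_tensor k (fun s => sig_rev g a s (t n j)) (fun i => (g (t n j.+1) - g (t n j)) 0 i)).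
  apply: le_trans (_ : L (t n j) ^+ k / (k`!)%:R * (L (t n j.+1) - L (t n j)) <= _).
    apply: ler_pM; [exact: En_ge0 | exact: enorm_ge0 | exact: IH | ].
    by rewrite lerBrDl.
  apply: pow_step => //.
  by apply: le_trans Lst; rewrite lerDl enorm_ge0.
rewrite -mulr_suml (tele (fun j => L (t n j) ^+ k.+1)) ler_wpM2r ?invr_ge0 ?ler0n //.
have [t0 [tn _]] := upart_tp a u n au.
rewrite /t tn lerBlDr lerDl exprn_ge0 // t0.
exact: L_ge0 BV (lexx a) (le_trans au ub).
Qed.
Lemma tp_range {R : realType} (a u : R) n t xi :
  tagged_partition a u n t xi -> forall j, (j < n)%N -> a <= xi j <= u.
Proof.
move=> [t0 [tn tm]].
have lo : forall j, (j <= n)%N -> a <= t j.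
  elim => [|j IH] jn; first by rewrite t0.
  have /andP[h1 h2] := tm j jn.
  exact: le_trans (IH (ltnW jn)) (le_trans h1 h2).
have hi : forall m, (m <= n)%N -> t (n - m)%N <= u.
  elim => [|m IH] mn; first by rewrite subn0 tn.
  have h : (n - m.+1 < n)%N by rewrite ltn_subrL (leq_trans _ mn).
  have /andP[h1 h2] := tm _ h.
  apply: le_trans (le_trans h1 h2) _.
  by rewrite -subSn // subSS; apply: IH; exact: ltnW.
move=> j jn; have /andP[h1 h2] := tm j jn; apply/andP; split.
  exact: le_trans (lo j (ltnW jn)) h1.
apply: le_trans h2 _.
have := hi (n - j.+1)%N (leq_subr _ _); rewrite subKn //.
Qed.

Lemma is_RS_scale {R : realType} (F G F' G' : R -> R) a u c I :
  (forall n t xi, tagged_partition a u n t xi ->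
     RS_sum F' G' n t xi = c * RS_sum F G n t xi) ->
  is_RS_integral F G a u I -> is_RS_integral F' G' a u (c * I).
Proof.
move=> Hs HI e e0.
have e1 : 0 < e / (`|c| + 1) by rewrite divr_gt0 // ltr_wpDl.
have [dl dl0 Hd] := HI _ e1.
exists dl => // n t xi T M.
rewrite Hs // -mulrBr normrM.
have H1 : `|c| * `|RS_sum F G n t xi - I| <= `|c| * (e / (`|c| + 1)).
  by apply: ler_wpM2l => //; apply: ltW; exact: Hd.
apply: le_lt_trans H1 _.
rewrite mulrA ltr_pdivrMr ?ltr_wpDl // mulrC ltr_pM2l //.
by rewrite ltrDl.
Qed.

Lemma RS_integral_scale {R : realType} (F G F' G' : R -> R) a u c : a <= u ->
  (forall n t xi, tagged_partition a u n t xi ->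
     RS_sum F' G' n t xi = c * RS_sum F G n t xi) ->
  RS_integral F' G' a u = c * RS_integral F G a u.
Proof.
move=> au Hs.
have get : forall (F G : R -> R) I, is_RS_integral F G a u I -> RS_integral F G a u = I.
  move=> F1 G1 I HI; apply: (RS_unique F1 G1 a u _ _ au _ HI).
  by rewrite /RS_integral; apply: (xgetPex 0 (P := [set I | is_RS_integral F1 G1 a u I])); exists I.
have none : forall (F G : R -> R), ~ (exists I, is_RS_integral F G a u I) -> RS_integral F G a u = 0.
  move=> F1 G1 NI; rewrite /RS_integral; apply: xgetPN => x Hx; apply: NI; by exists x.
have [/eqP c0|c0] := boolP (c == 0).
  rewrite c0 mul0r; apply: get => e e0; exists 1 => // n t xi T _.
  by rewrite Hs // c0 mul0r subr0 normr0.
have [[I HI]|NI] := pselect (exists I, is_RS_integral F G a u I).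
  by rewrite (get _ _ _ HI); apply: get; exact: is_RS_scale HI.
rewrite (none _ _ NI) mulr0; apply: none => -[J HJ]; apply: NI.
exists (c^-1 * J); apply: (is_RS_scale F' G' F G a u c^-1 J _ HJ).
by move=> n t xi T; rewrite Hs // mulrA mulVf // mul1r.
Qed.

Lemma sig_rev_scale {R : realType} {d : nat} (g : R -> 'rV[R]_d) a x :
  forall (w : seq 'I_d) u, a <= u ->
  sig_rev (fun v => x *: g v) a w u = x ^+ size w * sig_rev g a w u.
Proof.
elim => [|i w IH] u au /=; first by rewrite mulr1.
apply: RS_integral_scale => // n t xi T.
rewrite /RS_sum mulr_sumr; apply: eq_bigr => j _.
have /andP[h1 h2] := tp_range a u n t xi T j (ltn_ord j).
rewrite IH // /Defs.coord !mxE exprS; ring.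
Qed.
Lemma fact_neq0 {R : realType} (n : nat) : (n`!)%:R != 0 :> R.
Proof. by rewrite pnatr_eq0 -lt0n fact_gt0. Qed.

Lemma pd_val {R : realType} (c : nat -> R) j l :
  iter j (@pseries_diffs R) c l = (l + j)`!%:R / (l`!)%:R * c (l + j)%N.
Proof.
elim: j l => [|j IH] l /=.
  by rewrite addn0 divff ?mul1r // fact_neq0.
rewrite /pseries_diffs IH addSnnS [(l.+1)`!]factS natrM.
have h1 := @fact_neq0 R l.
have h2 : l.+1%:R != 0 :> R by rewrite pnatr_eq0.
by field; rewrite h1 nat1r h2.
Qed.

Lemma pd_bound {R : realType} {c : nat -> R} {M : R} : 0 <= M ->
  (forall k, `|c k| <= M ^+ k / ((k`!)%:R ^+ 2)) ->
  forall j l, `|iter j (@pseries_diffs R) c l| <=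
     M ^+ (l + j) / ((l`!)%:R * ((l + j)`!)%:R).
Proof.
move=> M0 Hc j l; rewrite pd_val normrM ger0_norm ?divr_ge0 ?ler0n //.
apply: le_trans (ler_wpM2l _ (Hc _)) _; first by rewrite divr_ge0 ?ler0n.
have h1 := @fact_neq0 R l; have h2 := @fact_neq0 R (l + j).
rewrite le_eqVlt; apply/orP; left; apply/eqP; field; by rewrite h1 h2.
Qed.

Lemma cvg_exp_dom {R : realType} (u : nat -> R) (K y : R) : 0 <= y ->
  (forall l, `|u l| <= K * (y ^+ l / (l`!)%:R)) -> cvgn (series u).
Proof.
move=> y0 Hu; apply: normed_cvg.
have K0 : 0 <= K.
  have := Hu 0%N; rewrite expr0 fact0 divr1 mulr1; exact: le_trans.
apply: (series_le_cvg (v_ := fun l => K * (y ^+ l / (l`!)%:R))).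
- by move=> l /=.
- by move=> l /=; rewrite mulr_ge0 // divr_ge0 ?exprn_ge0 ?ler0n.
- by move=> l /=; exact: Hu.
exact: (@is_cvg_seriesZ _ _ K (is_cvg_series_exp_coeff y)).
Qed.

Lemma pd_cvg {R : realType} {c : nat -> R} {M : R} : 0 <= M ->
  (forall k, `|c k| <= M ^+ k / ((k`!)%:R ^+ 2)) ->
  forall j x, cvgn (pseries (iter j (@pseries_diffs R) c) x).
Proof.
move=> M0 Hc j x; apply: (cvg_exp_dom _ (M ^+ j) (M * `|x|)).
  by rewrite mulr_ge0.
move=> l; rewrite normrM normrX.
have H1 := pd_bound M0 Hc j l.
apply: le_trans (ler_wpM2r (exprn_ge0 l (normr_ge0 x)) H1) _.
have h1 := @fact_neq0 R l; have h2 := @fact_neq0 R (l + j).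
rewrite (_ : M ^+ j * ((M * `|x|) ^+ l / l`!%:R) =
   M ^+ (l + j) / l`!%:R * `|x| ^+ l); last by rewrite exprD exprMn; field.
rewrite ler_wpM2r ?exprn_ge0 // ler_wpM2l ?exprn_ge0 //.
rewrite lef_pV2 ?posrE ?mulr_gt0 ?ltr0n ?fact_gt0 //.
by rewrite ler_peMr ?ler0n // ler1n fact_gt0.
Qed.

Definition gser {R : realType} (c : nat -> R) (j : nat) (x : R) : R :=
  limn (pseries (iter j (@pseries_diffs R) c) x).

Lemma gser_derive {R : realType} {c : nat -> R} {M : R} : 0 <= M ->
  (forall k, `|c k| <= M ^+ k / ((k`!)%:R ^+ 2)) ->
  forall j x, is_derive x (1 : R) (gser c j) (gser c j.+1 x).
Proof.
move=> M0 Hc j x.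
apply: (@pseries_snd_diffs R (iter j (@pseries_diffs R) c) (`|x| + 1) x).
- exact: (pd_cvg M0 Hc j).
- exact: (pd_cvg M0 Hc j.+1).
- exact: (pd_cvg M0 Hc j.+2).
- rewrite [X in _ < X]ger0_norm ?addr_ge0 // ltrDl //.
Qed.

Lemma derive1n_gser {R : realType} {c : nat -> R} {M : R} : 0 <= M ->
  (forall k, `|c k| <= M ^+ k / ((k`!)%:R ^+ 2)) ->
  forall j, derive1n j (gser c 0) = gser c j.
Proof.
move=> M0 Hc; elim => [|j IH]; first by rewrite derive1n0.
rewrite derive1nS IH; apply/funext => x.
have H := gser_derive M0 Hc j x.
by rewrite derive1E (@derive_val _ _ _ _ _ _ _ H).
Qed.

Lemma lim_series_norm_le {R : realType} (u b : nat -> R) :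
  cvgn (series u) -> cvgn (series b) -> (forall l, `|u l| <= b l) ->
  `|limn (series u)| <= limn (series b).
Proof.
move=> cu cb H.
rewrite -lim_norm //; apply: ler_lim => //.
  exact: is_cvg_norm.
apply: nearW => n; rewrite /series /=.
apply: le_trans (ler_norm_sum _ _ _) _; apply: ler_sum => i _; exact: H.
Qed.
Lemma rev_tuple_inj {T : Type} {k : nat} : injective (@rev_tuple k T).
Proof.
move=> u v /(congr1 val) /= /(congr1 rev); rewrite !revK => h; exact: val_inj.
Qed.

Lemma En_coef {R : realType} {d : nat} (g : R -> 'rV[R]_d) a s k :
  En (fun w : k.-tuple 'I_d => sig_coef g a s w) =
  En (fun w : k.-tuple 'I_d => sig_rev g a w s).
Proof.
rewrite /En; congr Num.sqrt.
rewrite [RHS](reindex_inj rev_tuple_inj) /=.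
by apply: eq_bigr.
Qed.

Lemma inner_bound {R : realType} {d : nat} (g h : R -> 'rV[R]_d) a b s t :
  bounded_variation_path g a b -> bounded_variation_path h a b ->
  a <= s -> s <= b -> a <= t -> t <= b ->
  forall k, `|sig_inner g h a s t k| <=
    (path_length g a s * path_length h a t) ^+ k / ((k`!)%:R ^+ 2).
Proof.
move=> BVg BVh aS sb aT tb k.
rewrite /sig_inner.
apply: le_trans (ler_norm_sum _ _ _) _.
have := CS (fun w : k.-tuple 'I_d => `|sig_coef g a s w|)
           (fun w : k.-tuple 'I_d => `|sig_coef h a t w|).
rewrite !En_abs !En_coef => H.
under eq_bigr do rewrite normrM.
apply: le_trans H _.
rewrite exprMn expr2 invfM mulrACA.
apply: ler_pM; [exact: En_ge0 | exact: En_ge0 | exact: (sig_bound g a b BVg k s aS sb) | exact: (sig_bound h a b BVh k t aT tb)].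
Qed.

Lemma inner_scale {R : realType} {d : nat} (g h : R -> 'rV[R]_d) a s t x k :
  a <= s ->
  sig_inner (fun u => x *: g u) h a s t k = sig_inner g h a s t k * x ^+ k.
Proof.
move=> aS; rewrite /sig_inner mulr_suml; apply: eq_bigr => w _.
rewrite /sig_coef sig_rev_scale // size_rev size_tuple; ring.
Qed.

Lemma powR_half {R : realType} (y : R) (k : nat) : 0 <= y ->
  powR y (k%:R / 2) = Num.sqrt y ^+ k.
Proof.
move=> y0; rewrite mulrC powRrM powR12_sqrt // powR_mulrn //; exact: sqrtr_ge0.
Qed.
Lemma bessel_cvg {R : realType} (z : R) (k : nat) : 0 <= z ->
  cvgn (series (fun m : nat => (z / 2) ^+ (2 * m + k) / ((m`!)%:R * ((m + k)`!)%:R))).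
Proof.
move=> z0; set r := z / 2.
have r0 : 0 <= r by rewrite divr_ge0.
apply: (cvg_exp_dom _ (r ^+ k) (r ^+ 2)); first exact: sqr_ge0.
move=> m; rewrite ger0_norm ?divr_ge0 ?exprn_ge0 ?mulr_ge0 ?ler0n //.
have h1 := @fact_neq0 R m; have h2 := @fact_neq0 R (m + k).
rewrite (_ : r ^+ (2 * m + k) / (m`!%:R * (m + k)`!%:R) =
   r ^+ k * ((r ^+ 2) ^+ m / m`!%:R) / (m + k)`!%:R); last first.
  rewrite exprD exprM; set A := r ^+ k; set B := (r ^+ 2) ^+ m.
  by field; rewrite h1 h2.
rewrite ler_pdivrMr ?ltr0n ?fact_gt0 // ler_peMr ?ler1n ?fact_gt0 //.
by rewrite mulr_ge0 ?divr_ge0 ?exprn_ge0 ?ler0n.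
Qed.

Lemma b_cvg {R : realType} (M y : R) (k : nat) : 0 <= M -> 0 <= y ->
  cvgn (series (fun l : nat => M ^+ (l + k) / ((l`!)%:R * ((l + k)`!)%:R) * y ^+ l)).
Proof.
move=> M0 y0; apply: (cvg_exp_dom _ (M ^+ k) (M * y)); first by rewrite mulr_ge0.
move=> l; rewrite ger0_norm ?mulr_ge0 ?divr_ge0 ?exprn_ge0 ?mulr_ge0 ?ler0n //.
have h1 := @fact_neq0 R l; have h2 := @fact_neq0 R (l + k).
rewrite (_ : M ^+ k * ((M * y) ^+ l / l`!%:R) =
   M ^+ (l + k) / l`!%:R * y ^+ l); last by rewrite exprD exprMn; field.
rewrite ler_wpM2r ?exprn_ge0 // ler_wpM2l ?exprn_ge0 //.
rewrite lef_pV2 ?posrE ?mulr_gt0 ?ltr0n ?fact_gt0 //.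
by rewrite ler_peMr ?ler0n // ler1n fact_gt0.
Qed.
Theorem mainTheorem15 (R : realType) (d : nat) (a b : R)
  (gamma sigma : R -> 'rV[R]_d) (s t : R) :
  {within `[a, b], continuous gamma} ->
  {within `[a, b], continuous sigma} ->
  bounded_variation_path gamma a b ->
  bounded_variation_path sigma a b ->
  s \in `[a, b] -> t \in `[a, b] ->
  let f := fun x : R => sig_kernel (fun u => x *: gamma u) sigma a s t in
  (forall (k : nat) (x : R), derivable (derive1n k f) x 1) /\
  (forall (k : nat) (x : R),
     series (fun l : nat => x ^+ l * ((l + k)`!%:R / (l`!)%:R)
                            * sig_inner gamma sigma a s t (l + k))
       @ \oo --> derive1n k f x) /\
  (forall (k : nat) (x : R), x != 0 \/ k = 0%N ->
     `|derive1n k f x| <=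
       powR (path_length gamma a s) (k%:R / 2) * powR (path_length sigma a t) (k%:R / 2)
       / powR `|x| (k%:R / 2)
       * besselI k (2 * Num.sqrt (`|x| * path_length gamma a s * path_length sigma a t))).
Proof.
move=> _ _ BVg BVs sab tab f.
have /andP[aS sb] : (a <= s) && (s <= b) by move: sab; rewrite in_itv.
have /andP[aT tb] : (a <= t) && (t <= b) by move: tab; rewrite in_itv.
set Lg := path_length gamma a s; set Ls := path_length sigma a t.
have Lg0 : 0 <= Lg := L_ge0 BVg aS sb.
have Ls0 : 0 <= Ls := L_ge0 BVs aT tb.
set c := sig_inner gamma sigma a s t.
set M := Lg * Ls.
have M0 : 0 <= M by rewrite mulr_ge0.
have Hc : forall k, `|c k| <= M ^+ k / ((k`!)%:R ^+ 2).
  move=> k; exact: (inner_bound gamma sigma a b s t BVg BVs aS sb aT tb k).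
have fE : f = gser c 0.
  apply/funext => x; rewrite /f /sig_kernel /gser /pseries /=.
  congr (limn (series _)); apply/funext => k /=.
  exact: inner_scale.
have Df := derive1n_gser M0 Hc.
split; [|split].
- move=> k x; rewrite fE Df.
  exact: (@ex_derive _ _ _ _ _ _ _ (gser_derive M0 Hc k x)).
- move=> k x; rewrite fE Df /gser.
  have := pd_cvg M0 Hc k x.
  rewrite /pseries; set u := (X in series X).
  rewrite (_ : u = (fun l : nat => x ^+ l * ((l + k)`!%:R / (l`!)%:R) * c (l + k)%N)) //.
  apply/funext => l; rewrite /u /= pd_val; ring.
- move=> k x hx; rewrite fE Df.
  pose bb := fun l : nat => M ^+ (l + k) / ((l`!)%:R * ((l + k)`!)%:R) * `|x| ^+ l.
  have cb : cvgn (series bb) := b_cvg M `|x| k M0 (normr_ge0 x).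
  apply: le_trans (_ : limn (series bb) <= _).
    apply: lim_series_norm_le => //; first exact: pd_cvg M0 Hc k x.
    move=> l; rewrite normrM normrX /bb.
    by apply: ler_wpM2r; [exact: exprn_ge0 | exact: pd_bound].
  set z := 2 * _.
  have z0 : 0 <= z by rewrite mulr_ge0 // sqrtr_ge0.
  set C := (Lg `^ _ * _ / _).
  rewrite /besselI -[C * _]/(C *: _) -lim_seriesZ; last exact: (bessel_cvg z k z0).
  rewrite le_eqVlt; apply/orP; left; apply/eqP.
  congr (limn (series _)); apply/funext => m /=.
  set r := z / 2.
  have rE : r = Num.sqrt (`|x| * Lg * Ls) by rewrite /r /z mulrC mulKf.
  have r2 : r ^+ 2 = `|x| * M by rewrite rE sqr_sqrtr ?mulr_ge0 // /M mulrA.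
  have CrE : C * r ^+ k = M ^+ k.
    case: hx => [x0|k0]; last first.
      rewrite /C k0 (_ : (0%N%:R / 2 : R) = 0) ?mul0r // !powRr0 !expr0 invr1 !mulr1 //.
    rewrite /C !powR_half // rE sqrtrM ?mulr_ge0 // sqrtrM //.
    have sx : Num.sqrt `|x| != 0 by rewrite sqrtr_eq0 -ltNge normr_gt0.
    rewrite -exprVn -!exprMn /M; congr (_ ^+ k).
    rewrite (_ : Num.sqrt Lg * Num.sqrt Ls * (Num.sqrt `|x|)^-1 *
       (Num.sqrt `|x| * Num.sqrt Lg * Num.sqrt Ls) =
       Num.sqrt Lg ^+ 2 * Num.sqrt Ls ^+ 2); last by field.
    by rewrite !sqr_sqrtr.
  have h1 := @fact_neq0 R m; have h2 := @fact_neq0 R (m + k).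
  rewrite (_ : (C *: _) m = C * (r ^+ (2 * m + k)%N / ((m`!)%:R * ((m + k)`!)%:R))) //.
  rewrite /bb [r ^+ (2 * m + k)%N]exprD exprM r2 [M ^+ (m + k)%N]exprD -CrE [(`|x| * M) ^+ m]exprMn.
  set A := C; set B := r ^+ k; set D := M ^+ m; set E := `|x| ^+ m.
  clearbody A B D E. by field; rewrite h1 h2.
Qed.
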